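(* Let a group $G$ act faithfully and uniformly equicontinuously on a cofinite graph $\Gamma$, let $I$ be a fundamental system of $G$-invariant compatible cofinite entourages of $\Gamma$, let $\widehat{\Gamma}=\varprojlim_{R\in I}\Gamma/R$ and $\widehat{G}=\varprojlim_{R\in I}G/N_R$, with $\widehat{G}$ acting on $\widehat{\Gamma}$ by $(N_R[g_R])_R\cdot(R[x_R])_R=(R[g_R\cdot x_R])_R$. For $R\in I$ let $\overline{R}$ be the closure of $R$ in $\widehat{\Gamma}\times\widehat{\Gamma}$, let $\overline{N_R}$ be the closure of $N_R$ in $\widehat{G}\times\widehat{G}$, and let $N_{\overline R}=\{(g,h)\in\widehat{G}\times\widehat{G}:(g\cdot x,h\cdot x)\in\overline{R}\text{ for all }x\in\widehat{\Gamma}\}$. Then $\Phi_1=\{N_{\overline R}\mid R\in I\}$ and $\Phi_2=\{\overline{N_R}\mid R\in I\}$ are fundamental systems of cofinite congruences on $\widehat{G}$ defining equivalent uniformities on $\widehat{G}$.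
   Context: A graph $\Gamma$ is a set $\Gamma=V(\Gamma)\sqcup E(\Gamma)$ with maps $s,t\colon E\to V$ and a fixed-point-free involution $e\mapsto\overline e$ with $s(\overline e)=t(e)$, $t(\overline e)=s(e)$. An equivalence relation $R$ on $\Gamma$ is compatible if $R\subseteq (V\times V)\cup(E\times E)$, $(e,e')\in R$ implies $(s(e),s(e')),(t(e),t(e')),(\overline e,\overline{e'})\in R$, and $(e,\overline e)\notin R$. A cofinite entourage is an entourage that is an equivalence relation with finitely many classes; a cofinite congruence on a group is a cofinite equivalence relation $N$ with $(a,b),(c,d)\in N\Rightarrow(ac,bd)\in N$. A cofinite graph is a graph with a Hausdorff uniformity in which compatible cofinite entourages form a fundamental system. A group $G$ acts on $\Gamma$ if it acts on the set $\Gamma$ preserving vertices and edges, commuting with $s,t,\overline{\phantom e}$, and there is a $G$-invariant orientation. The action is uniformly equicontinuous if for each entourage $W$ there is an entourage $V$ with $(g\times g)[V]\subseteq W$ for all $g\in G$; it is faithful if every $g\ne 1$ moves some point. $R$ is $G$-invariant if $(g\times g)[R]\subseteq R$ for all $g$. $N_R=\{(g,h)\in G\times G:(g\cdot x,h\cdot x)\in R\ \forall x\in\Gamma\}$, a cofinite congruence on $G$; $G$ carries the uniformity with fundamental system $\{N_R: R\in I\}$, and $\widehat G$, $\widehat\Gamma$ are the corresponding completions, with $G\subseteq\widehat G$ and $\Gamma\subseteq\widehat\Gamma$. *)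

(* Defs.v *)
From Stdlib Require Import List.
Import ListNotations.
Set Implicit Arguments.

Definition hrel (T : Type) := T -> T -> Prop.
Definition subrel {T} (R S : hrel T) : Prop := forall x y, R x y -> S x y.

Record Group := {
  gcar :> Type;
  gmul : gcar -> gcar -> gcar;
  gone : gcar;
  ginv : gcar -> gcar;
  gmulA : forall a b c, gmul a (gmul b c) = gmul (gmul a b) c;
  gmul1l : forall a, gmul gone a = a;
  gmulVl : forall a, gmul (ginv a) a = gone
}.

(** Graph: a set Gamma = V ⊔ E ; [isV x] means x is a vertex, otherwise an
    edge. [src], [tgt], [gbar] are only meaningful on edges. *)
Record Graph := {
  gpt :> Type;
  isV : gpt -> Prop;
  src : gpt -> gpt;
  tgt : gpt -> gpt;
  gbar : gpt -> gpt;
  src_V : forall e, ~ isV e -> isV (src e);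
  tgt_V : forall e, ~ isV e -> isV (tgt e);
  bar_E : forall e, ~ isV e -> ~ isV (gbar e);
  bar_inv : forall e, ~ isV e -> gbar (gbar e) = e;
  bar_nofix : forall e, ~ isV e -> gbar e <> e;
  src_bar : forall e, ~ isV e -> src (gbar e) = tgt e;
  tgt_bar : forall e, ~ isV e -> tgt (gbar e) = src e
}.

Arguments isV {g} _.
Arguments src {g} _.
Arguments tgt {g} _.
Arguments gbar {g} _.
Arguments gmul {g} _ _.
Arguments gone : clear implicits.
Arguments ginv {g} _.

Definition isE {X : Graph} (x : X) : Prop := ~ isV x.

Definition is_equiv {T} (R : hrel T) : Prop :=
  (forall x, R x x) /\ (forall x y, R x y -> R y x) /\
  (forall x y z, R x y -> R y z -> R x z).

Definition finitely_many_classes {T} (R : hrel T) : Prop :=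
  exists reps : list T, forall x, exists r, In r reps /\ R x r.

Definition compatible {X : Graph} (R : hrel X) : Prop :=
  is_equiv R /\
  (forall x y, R x y -> (isV x /\ isV y) \/ (isE x /\ isE y)) /\
  (forall e e', isE e -> isE e' -> R e e' ->
     R (src e) (src e') /\ R (tgt e) (tgt e') /\ R (gbar e) (gbar e')) /\
  (forall e, isE e -> ~ R e (gbar e)).

Definition is_uniformity {T} (U : hrel T -> Prop) : Prop :=
  (exists W, U W) /\
  (forall W W', U W -> subrel W W' -> U W') /\
  (forall W1 W2, U W1 -> U W2 -> U (fun x y => W1 x y /\ W2 x y)) /\
  (forall W x, U W -> W x x) /\
  (forall W, U W -> U (fun x y => W y x)) /\
  (forall W, U W -> exists V, U V /\
      subrel (fun x z => exists y, V x y /\ V y z) W).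

Definition hausdorff {T} (U : hrel T -> Prop) : Prop :=
  forall x y, (forall W, U W -> W x y) -> x = y.

Definition cofinite_entourage {T} (U : hrel T -> Prop) (R : hrel T) : Prop :=
  U R /\ is_equiv R /\ finitely_many_classes R.

Definition cofinite_graph {X : Graph} (U : hrel X -> Prop) : Prop :=
  is_uniformity U /\ hausdorff U /\
  (forall W, U W -> exists R, cofinite_entourage U R /\ compatible R /\ subrel R W).

(** Group action on a graph (with a G-invariant orientation). *)
Definition graph_action {G : Group} {X : Graph} (act : G -> X -> X) : Prop :=
  (forall x, act (gone G) x = x) /\
  (forall g h x, act (gmul g h) x = act g (act h x)) /\
  (forall g x, isV (act g x) <-> isV x) /\
  (forall g e, isE e ->
     act g (src e) = src (act g e) /\ act g (tgt e) = tgt (act g e) /\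
     act g (gbar e) = gbar (act g e)) /\
  (exists O : X -> Prop,
     (forall e, O e -> isE e) /\
     (forall e, isE e -> (O e \/ O (gbar e)) /\ ~ (O e /\ O (gbar e))) /\
     (forall g e, O e -> O (act g e))).

Definition unif_equicontinuous {G : Group} {X : Graph} (U : hrel X -> Prop)
    (act : G -> X -> X) : Prop :=
  forall W, U W -> exists V, U V /\
    forall g x y, V x y -> W (act g x) (act g y).

Definition faithful_action {G : Group} {X : Graph} (act : G -> X -> X) : Prop :=
  forall g, g <> gone G -> exists x, act g x <> x.

Definition G_invariant {G : Group} {X : Graph} (act : G -> X -> X) (R : hrel X) :=
  forall g x y, R x y -> R (act g x) (act g y).

Definition inv_fund_system {G : Group} {X : Graph} (U : hrel X -> Prop)
    (act : G -> X -> X) (I : hrel X -> Prop) : Prop :=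
  (forall R, I R -> cofinite_entourage U R /\ compatible R /\ G_invariant act R) /\
  (forall W, U W -> exists R, I R /\ subrel R W).

Definition NR {G : Group} {X : Graph} (act : G -> X -> X) (R : hrel X) : hrel G :=
  fun g h => forall x, R (act g x) (act h x).

(** A point of hat Gamma = lim_{R in I} Gamma/R is given by a
    family of representatives (x_R)_R, i.e. the point (R[x_R])_R; two families
    represent the same point iff they agree modulo every R in I.  Likewise for
    hat G = lim_{R in I} G/N_R.  Indices are the relations R in I, ordered by
    inclusion (R ⊆ S gives the projection Gamma/R -> Gamma/S). *)
Definition hatGamma (X : Graph) := hrel X -> X.
Definition hatG (G : Group) (X : Graph) := hrel X -> G.

Definition valid_hatGamma {X : Graph} (I : hrel X -> Prop) (xi : hatGamma X) :=
  forall R S, I R -> I S -> subrel R S -> S (xi R) (xi S).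

Definition valid_hatG {G : Group} {X : Graph} (act : G -> X -> X)
    (I : hrel X -> Prop) (gam : hatG G X) :=
  forall R S, I R -> I S -> subrel R S -> NR act S (gam R) (gam S).

Definition hatmul {G : Group} {X : Graph} (a b : hatG G X) : hatG G X :=
  fun R => gmul (a R) (b R).

Definition hatact {G : Group} {X : Graph} (act : G -> X -> X)
    (gam : hatG G X) (xi : hatGamma X) : hatGamma X :=
  fun R => act (gam R) (xi R).

(** Closure of R ⊆ Gamma×Gamma (embedded via x |-> (R[x])_R) in
    hat Gamma × hat Gamma for the inverse-limit (product) topology: every
    basic neighbourhood (finitely many coordinates fixed, in each factor)
    of (xi, eta) contains the image of a pair of R. *)
Definition closure_hatGamma {X : Graph} (I : hrel X -> Prop) (R : hrel X)
    : hrel (hatGamma X) :=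
  fun xi eta => forall Ts : list (hrel X), (forall T, In T Ts -> I T) ->
    exists x y, R x y /\ forall T, In T Ts -> T x (xi T) /\ T y (eta T).

Definition N_Rbar {G : Group} {X : Graph} (act : G -> X -> X)
    (I : hrel X -> Prop) (R : hrel X) : hrel (hatG G X) :=
  fun gam del => forall xi, valid_hatGamma I xi ->
    closure_hatGamma I R (hatact act gam xi) (hatact act del xi).

(** Closure of N_R ⊆ G×G (embedded via g |-> (N_R[g])_R) in hat G × hat G. *)
Definition closure_NR {G : Group} {X : Graph} (act : G -> X -> X)
    (I : hrel X -> Prop) (R : hrel X) : hrel (hatG G X) :=
  fun gam del => forall Ts : list (hrel X), (forall T, In T Ts -> I T) ->
    exists g h, NR act R g h /\
      forall T, In T Ts -> NR act T g (gam T) /\ NR act T h (del T).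

Definition cofinite_congruence_hatG {G : Group} {X : Graph} (act : G -> X -> X)
    (I : hrel X -> Prop) (N : hrel (hatG G X)) : Prop :=
  let V := valid_hatG act I in
  (forall a, V a -> N a a) /\
  (forall a b, V a -> V b -> N a b -> N b a) /\
  (forall a b c, V a -> V b -> V c -> N a b -> N b c -> N a c) /\
  (exists reps : list (hatG G X), (forall r, In r reps -> V r) /\
     forall a, V a -> exists r, In r reps /\ N a r) /\
  (forall a b c d, V a -> V b -> V c -> V d -> N a b -> N c d ->
     N (hatmul a c) (hatmul b d)).

Definition fund_system_congr_hatG {G : Group} {X : Graph} (act : G -> X -> X)
    (I : hrel X -> Prop) (Phi : hrel (hatG G X) -> Prop) : Prop :=
  (forall N, Phi N -> cofinite_congruence_hatG act I N) /\
  (exists N, Phi N) /\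
  (forall N1 N2, Phi N1 -> Phi N2 -> exists N3, Phi N3 /\
     forall a b, valid_hatG act I a -> valid_hatG act I b ->
       N3 a b -> N1 a b /\ N2 a b).

Definition equiv_systems_hatG {G : Group} {X : Graph} (act : G -> X -> X)
    (I : hrel X -> Prop) (Phi1 Phi2 : hrel (hatG G X) -> Prop) : Prop :=
  (forall N1, Phi1 N1 -> exists N2, Phi2 N2 /\
     forall a b, valid_hatG act I a -> valid_hatG act I b -> N2 a b -> N1 a b) /\
  (forall N2, Phi2 N2 -> exists N1, Phi1 N1 /\
     forall a b, valid_hatG act I a -> valid_hatG act I b -> N1 a b -> N2 a b).

(* Main.v *)
Require Import Defs.
From Stdlib Require Import List Classical.
Import ListNotations.


Lemma etrans {X : Type} (R : hrel X) (HR : is_equiv R) x y z : R x y -> R y z -> R x z.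
Proof. destruct HR as [_ [_ t]]. apply t. Qed.
Lemma esym {X : Type} (R : hrel X) (HR : is_equiv R) x y : R x y -> R y x.
Proof. destruct HR as [_ [s _]]. apply s. Qed.
Lemma erefl' {X : Type} (R : hrel X) (HR : is_equiv R) x : R x x.
Proof. destruct HR as [r _]. apply r. Qed.

Lemma NR_refl {G : Group} {X : Graph} (act : G -> X -> X) R (HR : is_equiv R) g :
  NR act R g g.
Proof. intros x. apply (erefl' R HR). Qed.
Lemma NR_sym {G : Group} {X : Graph} (act : G -> X -> X) R (HR : is_equiv R) g h :
  NR act R g h -> NR act R h g.
Proof. intros H x. apply (esym R HR), H. Qed.
Lemma NR_trans {G : Group} {X : Graph} (act : G -> X -> X) R (HR : is_equiv R) g h k :
  NR act R g h -> NR act R h k -> NR act R g k.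
Proof. intros H1 H2 x. apply (etrans R HR _ _ _ (H1 x) (H2 x)). Qed.

Lemma meet_list {X : Graph} (U : hrel X -> Prop) (I : hrel X -> Prop)
  (HU : forall W1 W2, U W1 -> U W2 -> U (fun x y => W1 x y /\ W2 x y))
  (HIU : forall R, I R -> U R)
  (Hf : forall W, U W -> exists R, I R /\ subrel R W) :
  forall Ts, (forall T, In T Ts -> I T) -> forall R, I R ->
   exists S, I S /\ subrel S R /\ forall T, In T Ts -> subrel S T.
Proof.
  induction Ts as [|T Ts IH]; intros HTs R HR.
  - exists R. split; [exact HR|]. split; [intros x y h; exact h| intros T []].
  - destruct (IH (fun T' h => HTs T' (or_intror h)) R HR) as [S' [HS' [HS'R HS'T]]].
    destruct (Hf _ (HU _ _ (HIU _ HS') (HIU _ (HTs T (or_introl eq_refl))))) as [S [HS HSs]].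
    exists S. split; [exact HS|]. split.
    + intros x y h. apply HS'R. apply (HSs _ _ h).
    + intros T0 [<-|hin] x y h.
      * apply (HSs _ _ h).
      * apply (HS'T _ hin). apply (HSs _ _ h).
Qed.

Lemma fin_code {A C : Type} (E : A -> A -> Prop) (code : A -> C -> Prop) (Cs : list C) :
  (forall a b c, code a c -> code b c -> E a b) ->
  exists reps : list A, forall a c, In c Cs -> code a c -> exists r, In r reps /\ E a r.
Proof.
  intros Hc. induction Cs as [|c Cs IH].
  - exists []. intros a c [].
  - destruct IH as [reps Hr].
    destruct (classic (exists a0, code a0 c)) as [[a0 Ha0]|Hn].
    + exists (a0 :: reps). intros a c' [<-|hin] Hac.
      * exists a0. split; [left; reflexivity | eapply Hc; eauto].
      * destruct (Hr a c' hin Hac) as [r [? ?]]. exists r; split; [right|]; auto.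
    + exists reps. intros a c' [<-|hin] Hac.
      * exfalso; apply Hn; eauto.
      * apply (Hr a c' hin Hac).
Qed.

Fixpoint codes {X : Type} (L D : list X) : list (list X) :=
  match D with [] => [[]] | _ :: D' => flat_map (fun r => map (cons r) (codes L D')) L end.

Lemma codes_in {X : Type} (L : list X) (P : X -> X -> Prop) : forall D f,
  Forall2 P D f -> Forall (fun y => In y L) f -> In f (codes L D).
Proof.
  intros D f H. induction H; intros HF; simpl.
  - left; reflexivity.
  - inversion HF; subst. apply in_flat_map. exists y. split; auto. apply in_map. auto.
Qed.

Lemma code_exists {X : Type} (L : list X) (P : X -> X -> Prop)
  (H : forall x, exists r, In r L /\ P x r) :
  forall D, exists f, Forall2 P D f /\ Forall (fun y => In y L) f.
Proof.
  induction D as [|d D IH].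
  - exists []; split; constructor.
  - destruct IH as [f [H1 H2]]; destruct (H d) as [r [Hr Hp]].
    exists (r::f); split; constructor; auto.
Qed.

Lemma forall2_common {X : Type} (P Q : X -> X -> Prop) : forall D f,
  Forall2 P D f -> Forall2 Q D f -> forall l, In l D -> exists r, P l r /\ Q l r.
Proof.
  intros D f H1; induction H1; intros H2 l0 Hl.
  - destruct Hl.
  - inversion H2; subst. destruct Hl as [<-|Hl]; eauto.
Qed.

Lemma fin_NR {G : Group} {X : Graph} (act : G -> X -> X) (R : hrel X)
  (HR : is_equiv R) (Hf : finitely_many_classes R) (Hinv : G_invariant act R) :
  exists gs : list G, forall g, exists r, In r gs /\ NR act R g r.
Proof.
  destruct Hf as [L HL].
  set (code := fun (g : G) (f : list X) =>
     Forall2 (fun l r => R (act g l) r) L f /\ Forall (fun y => In y L) f).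
  destruct (fin_code (NR act R) code (codes L L)) as [gs Hgs].
  - intros a b f [Ha _] [Hb _] x. destruct (HL x) as [l [Hl Hxl]].
    destruct (forall2_common _ _ _ _ Ha Hb l Hl) as [r [H1 H2]].
    apply (etrans R HR _ (act a l)); [apply Hinv; auto|].
    apply (etrans R HR _ r); [auto|].
    apply (etrans R HR _ (act b l)); [apply (esym R HR); auto|].
    apply Hinv. apply (esym R HR); auto.
  - exists gs. intros g.
    destruct (code_exists L (fun l r => R (act g l) r)
      (fun x => HL (act g x)) L) as [f [H1 H2]].
    apply (Hgs g f); [|split; auto].
    apply codes_in with (P := fun l r => R (act g l) r); auto.
Qed.

Lemma hatact_valid {G : Group} {X : Graph} (act : G -> X -> X) (I : hrel X -> Prop)
  (Heq : forall R, I R -> is_equiv R) (Hinv : forall R, I R -> G_invariant act R)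
  a xi S T : valid_hatG act I a -> valid_hatGamma I xi -> I S -> I T -> subrel S T ->
  T (act (a S) (xi S)) (act (a T) (xi T)).
Proof.
  intros Ha Hxi HS HT HST.
  apply (etrans T (Heq T HT) _ (act (a S) (xi T))).
  - apply (Hinv T HT). apply Hxi; auto.
  - apply (Ha S T HS HT HST).
Qed.

Lemma closure_NR_iff {G : Group} {X : Graph} (act : G -> X -> X) (I : hrel X -> Prop)
  (Heq : forall R, I R -> is_equiv R)
  (Hmeet : forall Ts, (forall T, In T Ts -> I T) -> forall R, I R ->
     exists S, I S /\ subrel S R /\ forall T, In T Ts -> subrel S T)
  R a b : I R -> valid_hatG act I a -> valid_hatG act I b ->
  (closure_NR act I R a b <-> NR act R (a R) (b R)).
Proof.
  intros HR Ha Hb. pose proof (Heq R HR) as HRe. split.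
  - intros H. destruct (H [R]) as [g [h [Hgh HT]]].
    + intros T [<-|[]]; exact HR.
    + destruct (HT R (or_introl eq_refl)) as [H1 H2].
      apply (NR_trans act _ HRe _ g); [apply (NR_sym act _ HRe); auto|].
      apply (NR_trans act _ HRe _ h); auto.
  - intros H Ts HTs. destruct (Hmeet Ts HTs R HR) as [S [HS [HSR HST]]].
    exists (a S), (b S). split.
    + apply (NR_trans act _ HRe _ (a R)); [apply (Ha S R HS HR HSR)|].
      apply (NR_trans act _ HRe _ (b R)); auto.
      apply (NR_sym act _ HRe). apply (Hb S R HS HR HSR).
    + intros T hin. split; [apply Ha | apply Hb]; auto.
Qed.

Lemma N_Rbar_iff {G : Group} {X : Graph} (act : G -> X -> X) (I : hrel X -> Prop)
  (Heq : forall R, I R -> is_equiv R) (Hinv : forall R, I R -> G_invariant act R)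
  (Hmeet : forall Ts, (forall T, In T Ts -> I T) -> forall R, I R ->
     exists S, I S /\ subrel S R /\ forall T, In T Ts -> subrel S T)
  R a b : I R -> valid_hatG act I a -> valid_hatG act I b ->
  (N_Rbar act I R a b <-> NR act R (a R) (b R)).
Proof.
  intros HR Ha Hb. pose proof (Heq R HR) as HRe. split.
  - intros H x.
    assert (Hv : valid_hatGamma I (fun _ => x)).
    { intros R' S' _ HS' _. apply (erefl' S' (Heq S' HS')). }
    destruct (H _ Hv [R]) as [x' [y' [Hxy HT]]].
    + intros T [<-|[]]; exact HR.
    + destruct (HT R (or_introl eq_refl)) as [H1 H2]. unfold hatact in H1, H2.
      apply (etrans R HRe _ x'); [apply (esym R HRe); auto|].
      apply (etrans R HRe _ y'); auto.
  - intros H xi Hxi Ts HTs. destruct (Hmeet Ts HTs R HR) as [S [HS [HSR HST]]].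
    exists (act (a S) (xi S)), (act (b S) (xi S)). split.
    + apply (etrans R HRe _ (act (a R) (xi R))).
      { apply (hatact_valid act I Heq Hinv); auto. }
      apply (etrans R HRe _ (act (b R) (xi R))); [apply H|].
      apply (esym R HRe). apply (hatact_valid act I Heq Hinv); auto.
    + intros T hin. unfold hatact. split; apply (hatact_valid act I Heq Hinv); auto.
Qed.

Theorem mainTheorem9 (G : Group) (X : Graph) (U : hrel X -> Prop)
    (act : G -> X -> X) (I : hrel X -> Prop)
    (hX : cofinite_graph U)
    (hact : graph_action act)
    (hfaith : faithful_action act)
    (hequi : unif_equicontinuous U act)
    (hI : inv_fund_system U act I) :
  let Phi1 := fun N => exists R, I R /\ N = N_Rbar act I R in
  let Phi2 := fun N => exists R, I R /\ N = closure_NR act I R in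
  fund_system_congr_hatG act I Phi1 /\
  fund_system_congr_hatG act I Phi2 /\
  equiv_systems_hatG act I Phi1 Phi2.
Proof.
  cbv zeta.
  destruct hX as [[[W0 HW0] [_ [Hmeet2 _]]] _].
  destruct hI as [HI1 HI2].
  destruct hact as [_ [Hcomp _]].
  assert (Heq : forall R, I R -> is_equiv R) by (intros R HR; apply (HI1 R HR)).
  assert (Hfin : forall R, I R -> finitely_many_classes R) by (intros R HR; apply (HI1 R HR)).
  assert (Hinv : forall R, I R -> G_invariant act R) by (intros R HR; apply (HI1 R HR)).
  assert (HIU : forall R, I R -> U R) by (intros R HR; apply (HI1 R HR)).
  pose proof (meet_list U I Hmeet2 HIU HI2) as Hmeet.
  pose proof (N_Rbar_iff act I Heq Hinv Hmeet) as Hiff1.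
  pose proof (closure_NR_iff act I Heq Hmeet) as Hiff2.
  assert (Hcong : forall R, I R ->
     cofinite_congruence_hatG act I (fun a b => NR act R (a R) (b R))).
  { intros R HR. pose proof (Heq R HR) as HRe.
    split; [|split; [|split; [|split]]].
    - intros a _. apply (NR_refl act _ HRe).
    - intros a b _ _ H. apply (NR_sym act _ HRe); auto.
    - intros a b c _ _ _ H1 H2. apply (NR_trans act _ HRe _ (b R)); auto.
    - destruct (fin_NR act R HRe (Hfin R HR) (Hinv R HR)) as [gs Hgs].
      exists (map (fun g => fun _ : hrel X => g) gs). split.
      + intros r Hr. apply in_map_iff in Hr. destruct Hr as [g [<- _]].
        intros R' S' _ HS' _. apply (NR_refl act _ (Heq S' HS')).
      + intros a _. destruct (Hgs (a R)) as [r [Hr Hn]].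
        exists (fun _ => r). split; auto. apply in_map_iff. eauto.
    - intros a b c d _ _ _ _ H1 H2 x. unfold hatmul. rewrite !Hcomp.
      apply (etrans R HRe _ (act (a R) (act (d R) x))).
      + apply (Hinv R HR). apply H2.
      + apply H1. }
  assert (Htrans : forall N N' : hrel (hatG G X),
     (forall a b, valid_hatG act I a -> valid_hatG act I b -> (N a b <-> N' a b)) ->
     cofinite_congruence_hatG act I N' -> cofinite_congruence_hatG act I N).
  { intros N N' Hi [C1 [C2 [C3 [[reps [Hr1 Hr2]] C5]]]].
    split; [|split; [|split; [|split]]].
    - intros a Ha. apply Hi; auto.
    - intros a b Ha Hb H. apply Hi; auto. apply C2; auto. apply Hi; auto.
    - intros a b c Ha Hb Hc H1 H2. apply Hi; auto. apply C3 with b; auto;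
        apply Hi; auto.
    - exists reps. split; auto. intros a Ha. destruct (Hr2 a Ha) as [r [Hr Hn]].
      exists r. split; auto. apply Hi; auto.
    - intros a b c d Ha Hb Hc Hd H1 H2.
      assert (Vm : forall x y, valid_hatG act I x -> valid_hatG act I y ->
                 valid_hatG act I (hatmul x y)).
      { intros x y Hx Hy R S HR HS HRS. unfold hatmul.
        pose proof (Heq S HS) as HSe.
        apply (NR_trans act _ HSe _ (gmul (x R) (y S))); auto; intros z; rewrite !Hcomp.
        - apply (Hinv S HS). apply Hy; auto.
        - apply Hx; auto. }
      apply Hi; auto. apply C5; auto; apply Hi; auto. }
  assert (Hbase : forall R1 R2, I R1 -> I R2 -> exists S, I S /\
     forall a b, valid_hatG act I a -> valid_hatG act I b ->
       NR act S (a S) (b S) -> NR act R1 (a R1) (b R1) /\ NR act R2 (a R2) (b R2)).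
  { intros R1 R2 H1 H2.
    destruct (Hmeet [R2] (fun T h => match h with or_introl e =>
        eq_ind R2 I H2 T e | or_intror f => False_ind _ f end) R1 H1)
      as [S [HS [HS1 HS2]]].
    exists S. split; auto. intros a b Ha Hb H.
    assert (K : forall T, I T -> subrel S T -> NR act T (a T) (b T)).
    { intros T HT HST. pose proof (Heq T HT) as HTe.
      apply (NR_trans act _ HTe _ (a S)); [apply (NR_sym act _ HTe); apply Ha; auto|].
      apply (NR_trans act _ HTe _ (b S)); [intros x; apply HST, H|]. apply Hb; auto. }
    split; apply K; auto. apply HS2; left; reflexivity. }
  destruct (HI2 W0 HW0) as [R0 [HR0 _]].
  split; [|split].
  - split; [|split].
    + intros N [R [HR ->]]. apply Htrans with (fun a b => NR act R (a R) (b R)).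
      * intros; apply Hiff1; auto.
      * auto.
    + exists (N_Rbar act I R0); exists R0; auto.
    + intros N1 N2 [R1 [HR1 ->]] [R2 [HR2 ->]].
      destruct (Hbase R1 R2 HR1 HR2) as [S [HS HSb]].
      exists (N_Rbar act I S). split; [exists S; auto|].
      intros a b Ha Hb H. apply Hiff1 in H; auto.
      destruct (HSb a b Ha Hb H). split; apply Hiff1; auto.
  - split; [|split].
    + intros N [R [HR ->]]. apply Htrans with (fun a b => NR act R (a R) (b R)).
      * intros; apply Hiff2; auto.
      * auto.
    + exists (closure_NR act I R0); exists R0; auto.
    + intros N1 N2 [R1 [HR1 ->]] [R2 [HR2 ->]].
      destruct (Hbase R1 R2 HR1 HR2) as [S [HS HSb]].
      exists (closure_NR act I S). split; [exists S; auto|].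
      intros a b Ha Hb H. apply Hiff2 in H; auto.
      destruct (HSb a b Ha Hb H). split; apply Hiff2; auto.
  - split.
    + intros N [R [HR ->]]. exists (closure_NR act I R). split; [exists R; auto|].
      intros a b Ha Hb H. apply Hiff1; auto. apply Hiff2; auto.
    + intros N [R [HR ->]]. exists (N_Rbar act I R). split; [exists R; auto|].
      intros a b Ha Hb H. apply Hiff2; auto. apply Hiff1; auto.
Qed.
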